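(* Let $F$ be an ordered field, let $\mathcal{U}$ be a free ultrafilter on $\mathbb{N}$, and let ${}^\ast F=F^{\mathbb{N}}/\mathcal{U}$ be the ultrapower. Let $\langle u_n\rangle_{n\in\mathbb{N}}$ be a sequence in $F$ and let $u\in{}^\ast F$ be its equivalence class. Consider the partition $\mathbb{N}=A\sqcup B\sqcup C$ where $A=\{n\in\mathbb{N}: u_n<u\}$, $B=\{n\in\mathbb{N}: u_n=u\}$, $C=\{n\in\mathbb{N}: u_n>u\}$ (here $u_n\in F$ is regarded as an element of ${}^\ast F$). Then exactly one of the following three possibilities occurs: (1) $B\in\mathcal{U}$, and then $\langle u_n\rangle$ contains an infinite constant subsequence; (2) $A\in\mathcal{U}$, and then $\langle u_n\rangle$ contains an infinite strictly increasing subsequence; (3) $C\in\mathcal{U}$, and then $\langle u_n\rangle$ contains an infinite strictly decreasing subsequence.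
   Context: A free ultrafilter $\mathcal{U}$ on $\mathbb{N}$ is an ultrafilter on $\mathbb{N}$ containing every cofinite subset of $\mathbb{N}$. The ultrapower ${}^\ast F=F^{\mathbb{N}}/\mathcal{U}$ is the set of equivalence classes $[\langle v_n\rangle]$ of sequences in $F$, where two sequences are equivalent iff $\{n: v_n=w_n\}\in\mathcal{U}$. It is ordered by $[\langle v_n\rangle]<[\langle w_n\rangle]$ iff $\{n\in\mathbb{N}: v_n<w_n\}\in\mathcal{U}$. Each $x\in F$ is identified with the class $[\langle x\rangle]$ of the constant sequence with value $x$; thus for $x\in F$, $x<[\langle w_n\rangle]$ iff $\{n: x<w_n\}\in\mathcal{U}$, and similarly for $=$ and $>$. *)

(* Defs.v *)
(* An ordered field is a [realFieldType] (a totally ordered field). *)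
From mathcomp Require Import all_boot all_order all_algebra.
Set Implicit Arguments. Unset Strict Implicit. Unset Printing Implicit Defensive.
Import Order.TTheory GRing.Theory Num.Theory.
Local Open Scope ring_scope.

Definition cofinite (X : nat -> Prop) : Prop :=
  exists N : nat, forall n : nat, (N <= n)%N -> X n.

Definition is_ultrafilter (U : (nat -> Prop) -> Prop) : Prop :=
  [/\ U (fun _ => True),
      ~ U (fun _ => False),
      (forall X Y : nat -> Prop, U X -> (forall n, X n -> Y n) -> U Y),
      (forall X Y : nat -> Prop, U X -> U Y -> U (fun n => X n /\ Y n)) &
      (forall X : nat -> Prop, U X \/ U (fun n => ~ X n))].

Definition is_free_ultrafilter (U : (nat -> Prop) -> Prop) : Prop :=
  is_ultrafilter U /\ (forall X : nat -> Prop, cofinite X -> U X).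

(* The ultrapower *F = F^N / U. Elements are represented by sequences
   (representatives of their classes); the order and equality of classes
   are given by the U-largeness of the corresponding index sets, which does
   not depend on the chosen representatives. *)
Definition ult_lt (F : realFieldType) (U : (nat -> Prop) -> Prop)
  (v w : nat -> F) : Prop := U (fun n => v n < w n).
Definition ult_eq (F : realFieldType) (U : (nat -> Prop) -> Prop)
  (v w : nat -> F) : Prop := U (fun n => v n = w n).

Definition ult_const (F : realFieldType) (x : F) : nat -> F := fun _ => x.

Definition strictly_incr_idx (phi : nat -> nat) : Prop :=
  forall i j : nat, (i < j)%N -> (phi i < phi j)%N.

Definition has_const_subseq (F : realFieldType) (u : nat -> F) : Prop :=
  exists phi : nat -> nat, strictly_incr_idx phi /\
    forall i j : nat, u (phi i) = u (phi j).

Definition has_incr_subseq (F : realFieldType) (u : nat -> F) : Prop :=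
  exists phi : nat -> nat, strictly_incr_idx phi /\
    forall i j : nat, (i < j)%N -> u (phi i) < u (phi j).

Definition has_decr_subseq (F : realFieldType) (u : nat -> F) : Prop :=
  exists phi : nat -> nat, strictly_incr_idx phi /\
    forall i j : nat, (i < j)%N -> u (phi j) < u (phi i).

(* Main.v *)
Require Import Defs.
From mathcomp Require Import all_boot all_order all_algebra.
From Stdlib Require Import ClassicalEpsilon Classical.
Import Order.TTheory GRing.Theory Num.Theory.
Set Implicit Arguments. Unset Strict Implicit.
Local Open Scope ring_scope.

Section Aux.
Variable U : (nat -> Prop) -> Prop.
Hypothesis hU : is_free_ultrafilter U.

Lemma U_mono X Y : U X -> (forall n, X n -> Y n) -> U Y.
Proof. by case: hU => [[_ _ h _ _] _]; apply: h. Qed.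
Lemma U_and X Y : U X -> U Y -> U (fun n => X n /\ Y n).
Proof. by case: hU => [[_ _ _ h _] _]; apply: h. Qed.
Lemma U_ult X : U X \/ U (fun n => ~ X n).
Proof. by case: hU => [[_ _ _ _ h] _]; apply: h. Qed.
Lemma U_nF : ~ U (fun _ => False).
Proof. by case: hU => [[_ h _ _ _] _]. Qed.

Lemma U_disj X Y : U X -> U Y -> (forall n, X n -> Y n -> False) -> False.
Proof.
move=> hX hY h; apply: U_nF; apply: U_mono (U_and hX hY) _.
by move=> n [a b]; exact: h a b.
Qed.

Lemma U_cover X Y Z : (forall n, X n \/ Y n \/ Z n) -> U X \/ U Y \/ U Z.
Proof.
move=> h; case: (U_ult X) => hX; first by left.
case: (U_ult Y) => hY; first by right; left.
right; right; apply: U_mono (U_and hX hY) _ => n [a b].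
by case: (h n) => [//|[//|//]].
Qed.

Lemma U_unb X : U X -> forall N, exists m, (N <= m)%N /\ X m.
Proof.
move=> hX N; apply: NNPP => hn.
have hc : U (fun n => ~ X n).
  case: hU => _ hf; apply: hf; exists N => n hn'; move=> xn; apply: hn; by exists n.
by apply: (U_disj hX hc) => n a b; exact: b a.
Qed.
End Aux.

Lemma chain (phi : nat -> nat) (R : nat -> nat -> Prop) :
  (forall a b c, R a b -> R b c -> R a c) ->
  (forall k, R (phi k) (phi k.+1)) -> forall i j, (i < j)%N -> R (phi i) (phi j).
Proof.
move=> tr h i j; elim: j => // j IH; rewrite ltnS leq_eqVlt => /orP [/eqP -> //|].
by move=> /IH hij; exact: tr hij (h j).
Qed.

Lemma build (P : nat -> Prop) (R : nat -> nat -> Prop) n0 :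
  P n0 -> (forall n, P n -> exists m, (n < m)%N /\ P m /\ R n m) ->
  exists phi : nat -> nat, (forall k, (phi k < phi k.+1)%N) /\ (forall k, R (phi k) (phi k.+1)).
Proof.
move=> p0 h.
have h' : forall n, exists m, P n -> (n < m)%N /\ P m /\ R n m.
  move=> n; case: (classic (P n)) => pn.
    by case: (h n pn) => m hm; exists m.
  by exists 0%N.
pose f n := proj1_sig (constructive_indefinite_description _ (h' n)).
have hf : forall n, P n -> (n < f n)%N /\ P (f n) /\ R n (f n).
  by move=> n; rewrite /f; case: constructive_indefinite_description.
pose phi k := iter k f n0.
have hp : forall k, P (phi k) by elim=> //= k IH; case: (hf _ IH) => _ [].
exists phi; split => k; by case: (hf _ (hp k)) => [a [b c]].
Qed.

Theorem theorem3p2 (F : realFieldType) (U : (nat -> Prop) -> Prop)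
  (hU : is_free_ultrafilter U) (u : nat -> F) :
  let A := fun n : nat => ult_lt U (ult_const (u n)) u in
  let B := fun n : nat => ult_eq U (ult_const (u n)) u in
  let C := fun n : nat => ult_lt U u (ult_const (u n)) in
  ((U B /\ ~ U A /\ ~ U C) \/ (U A /\ ~ U B /\ ~ U C) \/ (U C /\ ~ U A /\ ~ U B))
  /\ (U B -> has_const_subseq u)
  /\ (U A -> has_incr_subseq u)
  /\ (U C -> has_decr_subseq u).
Proof.
move=> A B C.
have dAB : forall n, A n -> B n -> False.
  move=> n a b; apply: (U_disj hU a b) => m h1 h2; by rewrite h2 ltxx in h1.
have dAC : forall n, A n -> C n -> False.
  move=> n a b; apply: (U_disj hU a b) => m h1 h2.
  by have := lt_trans h1 h2; rewrite ltxx.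
have dBC : forall n, B n -> C n -> False.
  move=> n a b; apply: (U_disj hU a b) => m h1 h2; by rewrite h1 ltxx in h2.
have cov : forall n, A n \/ B n \/ C n.
  move=> n; apply: (U_cover hU) => m.
  by case: (ltgtP (u n) (u m)) => h; [left|right;right|right;left].
have step : forall (P : nat -> Prop) (Rl : F -> F -> Prop), U P ->
    (forall n, P n -> U (fun m => Rl (u n) (u m))) ->
    exists n0, P n0 /\ forall n, P n -> exists m, (n < m)%N /\ P m /\ Rl (u n) (u m).
  move=> P Rl hP hR.
  case: (U_unb hU hP 0) => n0 [_ p0]; exists n0; split => // n pn.
  case: (U_unb hU (U_and hU hP (hR n pn)) n.+1) => m [hm [pm rm]].
  by exists m.
split.
  case: (U_cover hU cov) => [hA|[hB|hC]].
  - right; left; split => //; split => [hB|hC]; [exact: (U_disj hU hA hB dAB)|exact: (U_disj hU hA hC dAC)].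
  - left; split => //; split => [hA|hC]; [exact: (U_disj hU hA hB dAB)|exact: (U_disj hU hB hC dBC)].
  - right; right; split => //; split => [hA|hB]; [exact: (U_disj hU hA hC dAC)|exact: (U_disj hU hB hC dBC)].
split.
  move=> hB; case: (step B (fun x y => x = y) hB (fun n b => b)) => n0 [p0 hs].
  case: (build (R := fun a b => u a = u b) p0 hs) => phi [h1 h2].
  have si : strictly_incr_idx phi by apply: (chain (R := fun a b => (a < b)%N)) => // a b c; exact: ltn_trans.
  exists phi; split => // i j.
  have ch := chain (R := fun a b => u a = u b) (fun a b c x y => etrans x y) h2.
  case: (ltngtP i j) => [/ch //|/ch ->//|-> //].
split.
  move=> hA; case: (step A (fun x y => x < y) hA (fun n b => b)) => n0 [p0 hs].
  case: (build (R := fun a b => u a < u b) p0 hs) => phi [h1 h2].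
  exists phi; split; first by apply: (chain (R := fun a b => (a < b)%N)) => // a b c; exact: ltn_trans.
  by apply: (chain (R := fun a b => u a < u b)) => // a b c; exact: lt_trans.
move=> hC; case: (step C (fun x y => y < x) hC (fun n b => b)) => n0 [p0 hs].
case: (build (R := fun a b => u b < u a) p0 hs) => phi [h1 h2].
exists phi; split; first by apply: (chain (R := fun a b => (a < b)%N)) => // a b c; exact: ltn_trans.
by apply: (chain (R := fun a b => u b < u a)) => // a b c x y; exact: lt_trans y x.
Qed.
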